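(* Let $\Omega\subseteq\mathbb{R}^n$ be open, $U\in\mathcal{G}_c(\Omega)$, and let $\Gamma$ be a closed cone contained in the complement of $\Sigma_g(U)$. Let $u$ be a compactly supported representative of $U$. Then there exists $N$ such that for every $p\in\mathbb{N}_0$ there exists $M\in\mathbb{N}_0$ such that for every $\phi\in\mathcal{A}_M(\mathbb{R}^n)$ there exist $c>0$ and $\varepsilon_0>0$ with $$|\mathcal{F}(u(\phi_\varepsilon,\cdot))(\xi)|\le c\,\varepsilon^{-N}(1+|\xi|)^{-p}\qquad(\xi\in\Gamma,\ 0<\varepsilon<\varepsilon_0).$$
   Context: $\mathcal{A}_0(\mathbb{R})$ is the set of test functions on $\mathbb{R}$ with integral $1$; for $q\ge1$, $\mathcal{A}_q(\mathbb{R})$ consists of those $\phi\in\mathcal{A}_0(\mathbb{R})$ with $\int x^j\phi(x)\,dx=0$ for $1\le j\le q$; $\mathcal{A}_q(\mathbb{R}^n)$ is the set of tensor products $\phi\otimes\cdots\otimes\phi$ ($n$ factors) with $\phi\in\mathcal{A}_q(\mathbb{R})$. For $\phi\in\mathcal{D}(\mathbb{R}^n)$, $\phi_\varepsilon(x)=\varepsilon^{-n}\phi(x/\varepsilon)$. $\mathcal{E}_M(\Omega)$ is the set of maps $R:\mathcal{A}_0(\mathbb{R}^n)\times\Omega\to\mathbb{C}$, smooth in $x$, such that for all compact $K\subset\Omega$ and all $\alpha$ there is $N$ such that for all $\phi\in\mathcal{A}_N$ there are $c,\eta>0$ with $\sup_{x\in K}|\partial^\alpha R(\phi_\varepsilon,x)|\le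 c\varepsilon^{-N}$ for $0<\varepsilon<\eta$. $\mathcal{N}(\Omega)$ is the set of $R\in\mathcal{E}_M(\Omega)$ such that for all $K,\alpha$ and all $q\in\mathbb{N}$ there is $p$ such that for all $\phi\in\mathcal{A}_p$ there are $c,\eta>0$ with $\sup_{x\in K}|\partial^\alpha R(\phi_\varepsilon,x)|\le c\varepsilon^{q}$ for $0<\varepsilon<\eta$. The Colombeau algebra is $\mathcal{G}(\Omega)=\mathcal{E}_M(\Omega)/\mathcal{N}(\Omega)$; $\mathcal{G}_c(\Omega)$ is the subalgebra of compactly supported elements, which have representatives $u$ with $u(\phi,\cdot)$ supported in a fixed compact set. For $U\in\mathcal{G}_c$ with such a representative $u$, $\Sigma_g(U)\subseteq\mathbb{R}^n\setminus0$ is the complement of the set of $\xi_0\ne0$ possessing an open conic neighborhood $\Gamma_0$ such that: there is $N$ such that for all $p\in\mathbb{N}_0$ there is $M$ such that for all $\phi\in\mathcal{A}_M$ there are $c,\eta>0$ with $|\mathcal{F}(u(\phi_\varepsilon,\cdot))(\xi)|\le c\varepsilon^{-N}(1+|\xi|)^{-p}$ for $\xi\in\Gamma_0$, $0<\varepsilon<\eta$ (this is independent of the choice of representative). $\mathcal{F}$ denotes the Fourier transform. *)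

(* Defs.v *)
From HB Require Import structures.
From mathcomp Require Import all_boot all_order all_algebra.
From mathcomp Require Import all_classical all_reals all_analysis.
From mathcomp Require Export complex.

Set Implicit Arguments.
Unset Strict Implicit.
Unset Printing Implicit Defensive.

Import Order.TTheory GRing.Theory Num.Theory.
Import numFieldTopology.Exports numFieldNormedType.Exports.
Local Open Scope classical_set_scope.
Local Open Scope ring_scope.

Section ColombeauDefs.
Context {R : realType}.
Local Notation C := (R[i]).

Definition cabs (z : C) : R :=
  Num.sqrt (complex.Re z ^+ 2 + complex.Im z ^+ 2).

Definition rint (f : R -> R) : R := Rintegral lebesgue_measure setT f.
Definition cint (f : R -> C) : C :=
  (rint (fun x => complex.Re (f x)) +i* rint (fun x => complex.Im (f x)))%C.

Definition smooth1 (g : R -> R) : Prop :=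
  forall (k : nat) (x : R), derivable (derive1n k g) x 1.

Definition test_fun1 (phi : R -> C) : Prop :=
  smooth1 (fun x => complex.Re (phi x)) /\ smooth1 (fun x => complex.Im (phi x)) /\
  exists L : R, forall x : R, L < `|x| -> phi x = 0.

Definition A1 (q : nat) (phi : R -> C) : Prop :=
  test_fun1 phi /\ cint phi = 1 /\
  forall j : nat, (1 <= j <= q)%N ->
    cint (fun x => ((x ^+ j)%:C)%C * phi x) = 0.

Definition tensor (n : nat) (phi : R -> C) : 'rV[R]_n -> C :=
  fun x => \prod_(i < n) phi (x ord0 i).

Definition An (n q : nat) (Phi : 'rV[R]_n -> C) : Prop :=
  exists phi : R -> C, A1 q phi /\ Phi = tensor (n:=n) phi.
Arguments An : clear implicits.

Definition scale_eps (n : nat) (Phi : 'rV[R]_n -> C) (eps : R) : 'rV[R]_n -> C :=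
  fun x => ((eps ^- n)%:C)%C * Phi (eps^-1 *: x).

Definition dotp (n : nat) (x y : 'rV[R]_n) : R := \sum_(i < n) x ord0 i * y ord0 i.
Definition enorm (n : nat) (x : 'rV[R]_n) : R := Num.sqrt (dotp x x).

Definition pder (n : nat) (i : 'I_n) (f : 'rV[R]_n -> R) : 'rV[R]_n -> R :=
  fun x => derive f x (delta_mx 0 i).

Fixpoint dlist (n : nat) (l : seq 'I_n) (f : 'rV[R]_n -> R) : 'rV[R]_n -> R :=
  match l with
  | [::] => f
  | i :: l' => pder i (dlist l' f)
  end.

Definition dmulti (n : nat) (alpha : 'I_n -> nat) (f : 'rV[R]_n -> R)
  : 'rV[R]_n -> R :=
  foldr (fun i g => iter (alpha i) (pder i) g) f (enum 'I_n).

Definition cdmulti (n : nat) (alpha : 'I_n -> nat) (f : 'rV[R]_n -> C)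
  : 'rV[R]_n -> C :=
  fun x => (dmulti alpha (fun y => complex.Re (f y)) x +i*
            dmulti alpha (fun y => complex.Im (f y)) x)%C.

Definition rsmooth_on (n : nat) (Om : set 'rV[R]_n) (f : 'rV[R]_n -> R) : Prop :=
  forall (l : seq 'I_n) (x : 'rV[R]_n), Om x ->
    {for x, continuous (dlist l f)} /\
    forall i : 'I_n, derivable (dlist l f) x (delta_mx 0 i).

Definition csmooth_on (n : nat) (Om : set 'rV[R]_n) (f : 'rV[R]_n -> C) : Prop :=
  rsmooth_on Om (fun x => complex.Re (f x)) /\ rsmooth_on Om (fun x => complex.Im (f x)).

(* A map R : A_0(R^n) x Om -> C is encoded as a function
   ('rV_n -> C) -> 'rV_n -> C; only its values on A_0(R^n) x Om matter. *)
Definition moderate (n : nat) (Om : set 'rV[R]_n)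
    (u : ('rV[R]_n -> C) -> 'rV[R]_n -> C) : Prop :=
  (forall Phi, An n 0 Phi -> csmooth_on Om (u Phi)) /\
  forall K : set 'rV[R]_n, compact K -> K `<=` Om ->
  forall alpha : 'I_n -> nat, exists N : nat,
  forall Phi, An n N Phi ->
  exists c eta : R, 0 < c /\ 0 < eta /\
  forall eps : R, 0 < eps < eta -> forall x, K x ->
    cabs (cdmulti alpha (u (scale_eps Phi eps)) x) <= c * eps ^- N.

Definition compactly_supported (n : nat) (Om : set 'rV[R]_n)
    (u : ('rV[R]_n -> C) -> 'rV[R]_n -> C) : Prop :=
  exists K : set 'rV[R]_n, compact K /\ K `<=` Om /\
  forall Phi, An n 0 Phi -> forall x, Om x -> ~ K x -> u Phi x = 0.

Fixpoint intn (n : nat) : ('rV[R]_n -> R) -> R :=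
  match n return ('rV[R]_n -> R) -> R with
  | 0 => fun f => f 0
  | n'.+1 => fun f =>
      rint (fun t => intn (fun y : 'rV[R]_n' => f (row_mx (\row_(j < 1) t) y)))
  end.

Definition cexpi (t : R) : C := (cos t +i* sin t)%C.

Definition FT (n : nat) (f : 'rV[R]_n -> C) (xi : 'rV[R]_n) : C :=
  let g := fun x => cexpi (- dotp x xi) * f x in
  (intn (fun x => complex.Re (g x)) +i* intn (fun x => complex.Im (g x)))%C.

Definition ext0 (n : nat) (Om : set 'rV[R]_n) (f : 'rV[R]_n -> C) : 'rV[R]_n -> C :=
  fun x => if x \in Om then f x else 0.

Definition is_cone (n : nat) (G : set 'rV[R]_n) : Prop :=
  forall (xi : 'rV[R]_n) (lam : R), G xi -> 0 < lam -> G (lam *: xi).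

Definition micro_estimate (n : nat) (Om : set 'rV[R]_n)
    (u : ('rV[R]_n -> C) -> 'rV[R]_n -> C) (G : set 'rV[R]_n) : Prop :=
  exists N : nat, forall p : nat, exists M : nat,
  forall Phi, An n M Phi ->
  exists c eta : R, 0 < c /\ 0 < eta /\
  forall xi : 'rV[R]_n, G xi -> forall eps : R, 0 < eps < eta ->
    cabs (FT (ext0 Om (u (scale_eps Phi eps))) xi)
      <= c * eps ^- N * (1 + enorm xi) ^- p.

(* generalized wave front set Sigma_g(U), computed with the compactly
   supported representative u *)
Definition SigmaG (n : nat) (Om : set 'rV[R]_n)
    (u : ('rV[R]_n -> C) -> 'rV[R]_n -> C) : set 'rV[R]_n :=
  [set xi0 | xi0 != 0 /\
     ~ (exists G0 : set 'rV[R]_n,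
          open G0 /\ is_cone G0 /\ G0 xi0 /\ micro_estimate Om u G0)].

End ColombeauDefs.

Arguments An {R} n q Phi.

(* Main.v *)
Require Import Defs.
From HB Require Import structures.
From mathcomp Require Import all_boot all_order all_algebra.
From mathcomp Require Import all_classical all_reals all_analysis.
From mathcomp Require Import complex.
Import Order.TTheory GRing.Theory Num.Theory.
Import numFieldTopology.Exports numFieldNormedType.Exports.
Local Open Scope classical_set_scope.
Local Open Scope ring_scope.
Set Implicit Arguments.
Unset Strict Implicit.

From mathcomp Require Import lra ring.
Section Aux.
Context {R : realType}.

Lemma A1_mono (M1 M : nat) (phi : R -> R[i]) : (M1 <= M)%N -> A1 M phi -> A1 M1 phi.
Proof.
move=> hM [t [c h]]; split=> //; split=> // j /andP[j1 jM].
by apply: h; rewrite j1 (leq_trans jM hM).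
Qed.

Lemma An_mono n (M1 M : nat) (Phi : 'rV[R]_n -> R[i]) : (M1 <= M)%N -> An n M Phi -> An n M1 Phi.
Proof. by move=> hM [phi [hp ->]]; exists phi; split => //; apply: A1_mono hp. Qed.

Lemma epsN_le (eps : R) (N1 N : nat) : 0 < eps <= 1 -> (N1 <= N)%N -> eps ^- N1 <= eps ^- N.
Proof.
move=> /andP[e0 e1] hN; rewrite -!exprVn; apply: ler_weXn2l => //.
by rewrite invr_ge1 // unitfE gt_eqF.
Qed.

Lemma micro_union n (Om : set 'rV[R]_n) u G1 G2 :
  micro_estimate Om u G1 -> micro_estimate Om u G2 -> micro_estimate Om u (G1 `|` G2).
Proof.
move=> [N1 h1] [N2 h2]; exists (maxn N1 N2) => p.
have [M1 hM1] := h1 p; have [M2 hM2] := h2 p.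
exists (maxn M1 M2) => Phi hPhi.
have [c1 [e1 [c10 [e10 H1]]]] := hM1 Phi (An_mono (leq_maxl _ _) hPhi).
have [c2 [e2 [c20 [e20 H2]]]] := hM2 Phi (An_mono (leq_maxr _ _) hPhi).
exists (c1 + c2), (Num.min 1 (Num.min e1 e2)).
split; first by rewrite addr_gt0.
split; first by rewrite !lt_min ltr01 e10 e20.
move=> xi Gxi eps /andP[eps0]; rewrite !lt_min => /and3P[eps1 epse1 epse2].
have q0 : 0 <= (1 + enorm xi) ^- p.
  by rewrite invr_ge0 exprn_ge0 // addr_ge0 // sqrtr_ge0.
have epsb : 0 < eps <= 1 by rewrite eps0 ltW.
case: Gxi => Gxi.
- have E : 0 < eps < e1 by rewrite eps0.
  apply: (le_trans (H1 xi Gxi eps E)).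
  apply: ler_wpM2r => //; apply: ler_pM.
  + exact: ltW.
  + by rewrite invr_ge0 exprn_ge0 // ltW.
  + by rewrite lerDl ltW.
  + exact: epsN_le (leq_maxl _ _).
- have E : 0 < eps < e2 by rewrite eps0.
  apply: (le_trans (H2 xi Gxi eps E)).
  apply: ler_wpM2r => //; apply: ler_pM.
  + exact: ltW.
  + by rewrite invr_ge0 exprn_ge0 // ltW.
  + by rewrite lerDr ltW.
  + exact: epsN_le (leq_maxr _ _).
Qed.

Lemma micro_set0 n (Om : set 'rV[R]_n) u : micro_estimate Om u set0.
Proof. exists 0%N => p; exists 0%N => Phi _; exists 1, 1; do 2 split => //. Qed.

Lemma micro_sub n (Om : set 'rV[R]_n) u G1 G2 :
  G1 `<=` G2 -> micro_estimate Om u G2 -> micro_estimate Om u G1.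
Proof.
move=> s [N h]; exists N => p; have [M hM] := h p; exists M => Phi hP.
have [c [e [c0 [e0 H]]]] := hM Phi hP; exists c, e; do 2 split => //.
by move=> xi /s; apply: H.
Qed.

End Aux.
Section S.
Context {R : realType}.
Lemma ReM (r : R) (z : R[i]) : complex.Re ((r%:C)%C * z) = r * complex.Re z.
Proof. by case: z => a b /=; rewrite mul0r subr0. Qed.
Lemma ImM (r : R) (z : R[i]) : complex.Im ((r%:C)%C * z) = r * complex.Im z.
Proof. by case: z => a b /=; rewrite mul0r addr0. Qed.
Lemma cabs_le (a b : R) : cabs (a +i* b)%C <= `|a| + `|b|.
Proof.
rewrite /cabs /=.
have h : 0 <= `|a| + `|b| by rewrite addr_ge0.
rewrite -(ger0_norm h) -sqrtr_sqr ler_sqrt; last by rewrite sqr_ge0.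
rewrite -[a ^+ 2]real_normK ?num_real // -[b ^+ 2]real_normK ?num_real //.
rewrite sqrrD -addrA [_ *+ 2 + _]addrC addrA lerDl.
by rewrite mulrn_wge0 // mulr_ge0.
Qed.

Lemma scale_der (h : R -> R) (a b x : R) : derivable h (b * x) 1 ->
  derivable (fun y => a * h (b * y)) x 1 /\
  derive1 (fun y => a * h (b * y)) x = a * b * derive1 h (b * x).
Proof.
move=> dh.
have dm : derivable (fun y : R => b * y) x 1 := derivableZ (k:=b) (@derivable_id _ R^o x 1).
have dm' : derive1 (fun y : R => b * y) x = b.
  rewrite derive1E (@deriveZ _ R^o R^o id b x 1 (@derivable_id _ R^o x 1)).
  by rewrite derive_id scaler1.
have dc : derivable (h \o (fun y => b * y)) x 1 :=
  (derivable1_diffP _ _).2 (differentiable_comp ((derivable1_diffP _ _).1 dm) ((derivable1_diffP _ _).1 dh)).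
split; first exact: (derivableZ (k:=a) dc).
rewrite derive1E (@deriveZ _ R^o R^o _ a x 1 dc) -derive1E.
rewrite (derive1_comp (g:=h) dm dh) dm' /=.
have -> : a *: (derive1 h (b*x) * b) = a * (derive1 h (b*x) * b) by [].
by rewrite mulrA mulrAC.
Qed.

Lemma scale_iter (g : R -> R) (a b : R) : smooth1 g -> forall k,
  derive1n k (fun y => a * g (b * y)) = (fun y => (a * b ^+ k) * derive1n k g (b * y)).
Proof.
move=> hs; elim=> [|k IH].
  by rewrite !derive1n0; apply/funext => y; rewrite expr0 mulr1.
rewrite derive1nS IH; apply/funext => y.
have [_ ->] := scale_der (a * b ^+ k) (hs k (b * y)).
by rewrite derive1nS exprSr mulrA.
Qed.

Lemma smooth_scale (g : R -> R) (a b : R) : smooth1 g -> smooth1 (fun y => a * g (b * y)).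
Proof.
move=> hs k x; rewrite scale_iter //.
exact: (scale_der _ (hs k (b * x))).1.
Qed.

Definition scl (eps : R) (phi : R -> R[i]) : R -> R[i] :=
  fun x => ((eps^-1)%:C)%C * phi (eps^-1 * x).

Lemma test_scl (eps : R) phi : 0 < eps -> test_fun1 phi -> test_fun1 (scl eps phi).
Proof.
move=> e0 [sR [sI [L hL]]]; split; [|split].
- have -> : (fun x => complex.Re (scl eps phi x)) =
     (fun x => eps^-1 * complex.Re (phi (eps^-1 * x))).
    by apply/funext => x; rewrite /scl ReM.
  exact: (@smooth_scale (fun z => complex.Re (phi z)) _ _ sR).
- have -> : (fun x => complex.Im (scl eps phi x)) =
     (fun x => eps^-1 * complex.Im (phi (eps^-1 * x))).
    by apply/funext => x; rewrite /scl ImM.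
  exact: (@smooth_scale (fun z => complex.Im (phi z)) _ _ sI).
- exists (L * eps) => x hx; rewrite /scl hL ?mulr0 //.
  rewrite normrM gtr0_norm ?invr_gt0 // mulrC ltr_pdivlMr //.
Qed.

Lemma smooth_cont (g : R -> R) : smooth1 g -> continuous g.
Proof.
move=> hs x; have dg : derivable g x 1 by have := hs 0%N x; rewrite derive1n0.
exact: differentiable_continuous ((derivable1_diffP _ _).1 dg).
Qed.

Lemma dlin (b x : R) : derive1 (fun y : R => b * y) x = b.
Proof.
rewrite derive1E (@deriveZ _ R^o R^o id b x 1 (@derivable_id _ R^o x 1)).
by rewrite derive_id scaler1.
Qed.

Lemma int_restrict (f : R -> R) (c d : R) : (forall x, ~ (`[c, d]%classic x) -> f x = 0) ->
  (\int[lebesgue_measure]_x (f x)%:E = \int[lebesgue_measure]_(x in `[c, d]) (f x)%:E)%E.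
Proof.
move=> hf; rewrite [RHS]integral_mkcond; congr integral; apply/funext => x.
rewrite /patch; case: ifPn => // /negP hx.
have -> : f x = 0 by apply: hf => h; apply: hx; rewrite inE.
by [].
Qed.

Lemma rint_scale (g : R -> R) (eps L : R) : 0 < eps -> 0 < L -> smooth1 g ->
  (forall x, L < `|x| -> g x = 0) ->
  rint (fun x => eps^-1 * g (eps^-1 * x)) = rint g.
Proof.
move=> e0 L0 sg hg; have cg := smooth_cont sg.
pose F := fun x : R => eps^-1 * x.
have ie0 : 0 < eps^-1 by rewrite invr_gt0.
have dF : derive1 F = cst eps^-1 by apply/funext => x; rewrite dlin.
have Fa : F (- (L * eps)) = - L by rewrite /F mulrN mulrCA mulVf ?mulr1 // gt_eqF.
have Fb : F (L * eps) = L by rewrite /F mulrCA mulVf ?mulr1 // gt_eqF.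
have cF : continuous F := (@scaler_continuous _ R^o eps^-1).
have Hs : (\int[lebesgue_measure]_(x in `[(- L)%R, L]) (g x)%:E =
   \int[lebesgue_measure]_(x in `[(- (L * eps))%R, (L * eps)%R]) ((((g \o F) * cst eps^-1)%R x)%:E))%E.
  have := @integration_by_substitution_increasing R F g (- (L * eps)) (L * eps).
  rewrite Fa Fb dF; apply.
  - by have := mulr_ge0 (ltW L0) (ltW e0); lra.
  - by move=> x y _ _ xy; rewrite /F ltr_pM2l.
  - by move=> x _; apply: cst_continuous.
  - exact: is_cvg_cst.
  - exact: is_cvg_cst.
  - split.
    + by move=> x _; apply: (derivableZ (k:=eps^-1) (@derivable_id _ R^o x 1)).
    + exact: cvg_at_right_filter (cF _).
    + exact: cvg_at_left_filter (cF _).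
  - exact: continuous_subspaceT.
rewrite /rint /Rintegral; congr fine.
rewrite [RHS](int_restrict (c := - L) (d := L)); last first.
  move=> x hx; apply: hg; rewrite /= in_itv /= in hx.
  by apply: contrapT => h; apply: hx; rewrite -ler_norml; rewrite leNgt; apply/negP.
rewrite (int_restrict (c := - (L * eps)) (d := L * eps)); last first.
  move=> x hx; rewrite hg ?mulr0 //; rewrite /= in_itv /= in hx.
  rewrite normrM gtr0_norm // mulrC ltr_pdivlMr //.
  by apply: contrapT => h; apply: hx; rewrite -ler_norml; rewrite leNgt; apply/negP.
rewrite Hs; apply: eq_integral => x _; by rewrite /= mulrC.
Qed.

Lemma rint_scale_smooth (g : R -> R) (eps L : R) : 0 < eps -> smooth1 g ->
  (forall x, L < `|x| -> g x = 0) ->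
  rint (fun x => eps^-1 * g (eps^-1 * x)) = rint g.
Proof.
move=> e0 sg hg; apply: (@rint_scale g eps (`|L| + 1)) => //.
- move=> x hx; apply: hg; apply: le_lt_trans hx.
  by rewrite (le_trans (ler_norm L)) // lerDl.
Qed.

Lemma cint_scl (eps : R) phi : 0 < eps -> test_fun1 phi -> cint (scl eps phi) = cint phi.
Proof.
move=> e0 [sR [sI [L hL]]]; rewrite /cint.
have -> : (fun x => complex.Re (scl eps phi x)) =
     (fun x => eps^-1 * complex.Re (phi (eps^-1 * x))).
  by apply/funext => x; rewrite /scl ReM.
have -> : (fun x => complex.Im (scl eps phi x)) =
     (fun x => eps^-1 * complex.Im (phi (eps^-1 * x))).
  by apply/funext => x; rewrite /scl ImM.
rewrite (@rint_scale_smooth (fun z => complex.Re (phi z)) eps L) //; last first.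
  by move=> x /hL ->.
rewrite (@rint_scale_smooth (fun z => complex.Im (phi z)) eps L) //.
by move=> x /hL ->.
Qed.

Lemma A1_scl (eps : R) (M : nat) phi : 0 < eps -> A1 M phi -> A1 0 (scl eps phi).
Proof.
move=> e0 [t [c _]]; split; first exact: test_scl.
split; first by rewrite cint_scl.
by move=> j /andP[j1 j0]; move: (leq_trans j1 j0).
Qed.

Lemma tensor_scl n (eps : R) phi : 0 < eps ->
  scale_eps (tensor (n:=n) phi) eps = tensor (n:=n) (scl eps phi).
Proof.
move=> e0; apply/funext => x; rewrite /scale_eps /tensor /scl.
rewrite big_split /= prodr_const card_ord.
congr (_ * _).
  by rewrite -exprVn rmorphXn.
by apply: eq_bigr => i _; rewrite mxE.
Qed.

Lemma An_scale n (M : nat) (Phi : 'rV[R]_n -> R[i]) (eps : R) : 0 < eps -> An n M Phi ->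
  An n 0 (scale_eps Phi eps).
Proof.
move=> e0 [phi [hp ->]]; exists (scl eps phi); split; first exact: A1_scl hp.
exact: tensor_scl.
Qed.
End S.
Section I.
Context {R : realType}.
Local Notation mu := (@lebesgue_measure R).

Lemma nn_le (F G : R -> \bar R) : (forall x, (0 <= F x)%E) -> (forall x, (0 <= G x)%E) ->
  (forall x, (F x <= G x)%E) -> (\int[mu]_x F x <= \int[mu]_x G x)%E.
Proof.
move=> F0 G0 FG; rewrite !ge0_integralTE //; apply: ereal_sup_le => _ [h hF <-].
by exists h => //= x; apply: le_trans (hF x) (FG x).
Qed.

Lemma int_box (B L : R) : 0 <= B -> 0 <= L ->
  (\int[mu]_x (((fun _ => B%:E) \_ `[(- L)%R, L]) x) = (B * (L + L))%:E)%E.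
Proof.
move=> B0 L0; rewrite -integral_mkcond integral_cst //.
rewrite [X in (_ * X)%E](lebesgue_measure_itv `[(- L)%R, L]) /=.
have [h|h] := ltP (- L) L.
  by rewrite lte_fin h -EFinM opprK.
rewrite lte_fin ltNge h /= mule0.
have -> : L = 0 by lra.
by rewrite addr0 mulr0.
Qed.

Lemma int_part_le (h : R -> R) (B L : R) (s : bool) : 0 <= B -> 0 <= L ->
  (forall t, `|h t| <= B) -> (forall t, L < `|t| -> h t = 0) ->
  (0 <= \int[mu]_x (maxe ((if s then h x else - h x)%:E) 0) <= (B * (L + L))%:E)%E.
Proof.
move=> B0 L0 hB hL; apply/andP; split.
  by apply: integral_ge0 => x _; rewrite le_max lexx orbT.
rewrite -int_box //; apply: nn_le.
- by move=> x; rewrite le_max lexx orbT.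
- by move=> x; rewrite /patch; case: ifP => // _; rewrite lee_fin.
move=> x; have hx : `|(if s then h x else - h x)| <= B by case: s; rewrite ?normrN.
set v := (if s then h x else - h x) in hx *.
rewrite /patch; case: ifPn => xin.
  by rewrite ge_max lee_fin (le_trans (ler_norm _) hx) /= lee_fin.
have hx0 : h x = 0.
  apply: hL; rewrite ltNge; apply: contra xin => hx'.
  by rewrite inE /= in_itv /= -ler_norml.
have -> : v = 0 by rewrite /v hx0; case: (s); rewrite ?oppr0.
by rewrite maxxx.
Qed.

Lemma rint_bound (h : R -> R) (L B : R) : 0 <= L -> 0 <= B ->
  (forall t, `|h t| <= B) -> (forall t, L < `|t| -> h t = 0) ->
  `|rint h| <= (L + L) * B.
Proof.
move=> L0 B0 hB hL; rewrite /rint /Rintegral integralE.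
have /andP[P0 P1] := @int_part_le h B L true B0 L0 hB hL.
have /andP[N0 N1] := @int_part_le h B L false B0 L0 hB hL.
set P := (\int[mu]_x _)%E in P0 P1; set N := (\int[mu]_x _)%E in N0 N1.
have -> : (\int[mu]_(x in setT) ((fun x => (h x)%:E) ^\+ x))%E = P.
  by apply: eq_integral => x _; rewrite funeposE.
have -> : (\int[mu]_(x in setT) ((fun x => (h x)%:E) ^\- x))%E = N.
  by apply: eq_integral => x _; rewrite funenegE.
clearbody P N.
have Pf : P \is a fin_num by rewrite ge0_fin_numE // (le_lt_trans P1) // ltry.
have Nf : N \is a fin_num by rewrite ge0_fin_numE // (le_lt_trans N1) // ltry.
rewrite fineB //.
have p0 : 0 <= fine P := fine_ge0 P0.
have n0 : 0 <= fine N := fine_ge0 N0.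
have p1 : fine P <= B * (L + L) by rewrite -lee_fin fineK.
have n1 : fine N <= B * (L + L) by rewrite -lee_fin fineK.
move: (fine P) (fine N) p0 n0 p1 n1 => p q p0 q0 p1 q1.
rewrite mulrC ler_norml; apply/andP; split; lra.
Qed.

Lemma intn_bound n (g : 'rV[R]_n -> R) (L B : R) : 0 <= L -> 0 <= B ->
  (forall x, `|g x| <= B) -> (forall (x : 'rV[R]_n) (i : 'I_n), L < `|x ord0 i| -> g x = 0) ->
  `|intn g| <= (L + L) ^+ n * B.
Proof.
move=> L0; elim: n g B => [|n IH] g B B0 hB hg.
  by rewrite /= expr0 mul1r.
rewrite /=.
have L20 : 0 <= (L + L) ^+ n * B by rewrite mulr_ge0 // exprn_ge0 // addr_ge0.
apply: le_trans (@rint_bound _ L ((L + L) ^+ n * B) L0 L20 _ _) _.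
- move=> t; apply: IH => // y i hy.
  apply: (hg _ (rshift 1 i)); move: hy.
  by rewrite -(row_mxEr (\row_(j < 1) t) y ord0 i).
- move=> t ht; apply/eqP; rewrite -normr_le0.
  rewrite -(mulr0 ((L + L) ^+ n)); apply: IH => //.
    move=> y; rewrite (hg _ (lshift n (ord0 : 'I_1))) ?normr0 //.
    have e := row_mxEl (\row_(j < 1) t) y ord0 ord0; rewrite mxE in e; by rewrite [X in `|X|]e.
  move=> y i hy; apply: (hg _ (rshift 1 i)); move: hy.
  by rewrite -(row_mxEr (\row_(j < 1) t) y ord0 i).
- by rewrite exprS mulrA.
Qed.
End I.
Section M.
Context {R : realType}.

Lemma entry_le_norm n (x : 'rV[R]_n) i : `|x ord0 i| <= `|x|.
Proof.
have -> : `|x| = mx_norm x by [].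
rewrite mx_normrE; exact: (@le_bigmax _ _ _ 0 (fun ij : 'I_1 * 'I_n => `|x ij.1 ij.2|) (ord0, i)).
Qed.

Lemma Re_le_cabs (z : R[i]) : `|complex.Re z| <= cabs z.
Proof.
case: z => a b; rewrite /cabs /= -sqrtr_sqr ler_sqrt ?lerDl ?sqr_ge0 //.
by rewrite addr_ge0 ?sqr_ge0.
Qed.

Lemma Im_le_cabs (z : R[i]) : `|complex.Im z| <= cabs z.
Proof.
case: z => a b; rewrite /cabs /= -sqrtr_sqr ler_sqrt ?lerDr ?sqr_ge0 //.
by rewrite addr_ge0 ?sqr_ge0.
Qed.

Lemma dmulti0 n (f : 'rV[R]_n -> R) : dmulti (fun _ => 0%N) f = f.
Proof. by rewrite /dmulti; elim: (enum 'I_n) => //. Qed.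

Lemma cdmulti0 n (f : 'rV[R]_n -> R[i]) x : cdmulti (fun _ => 0%N) f x = f x.
Proof. by rewrite /cdmulti !dmulti0; case: (f x). Qed.

Lemma FT0 n (f : 'rV[R]_n -> R[i]) :
  FT f 0 = (intn (fun x => complex.Re (f x)) +i* intn (fun x => complex.Im (f x)))%C.
Proof.
rewrite /FT.
have e : forall x : 'rV[R]_n, cexpi (- dotp x 0) * f x = f x.
  move=> x; rewrite /dotp big1 ?oppr0; last by move=> i _; rewrite mxE mulr0.
  by rewrite /cexpi cos0 sin0 mul1r.
by congr (_ +i* _)%C; congr intn; apply/funext => x; rewrite e.
Qed.

Lemma enorm0 n : enorm (0 : 'rV[R]_n) = 0.
Proof. by rewrite /enorm /dotp big1 ?sqrtr0 // => i _; rewrite mxE mulr0. Qed.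

Lemma micro0 n (Om : set 'rV[R]_n) u : moderate Om u -> compactly_supported Om u ->
  micro_estimate Om u [set 0].
Proof.
move=> [_ hmod] [K [cK [KOm hsupp]]].
have [N hN] := hmod K cK KOm (fun _ => 0%N).
have [M0 [_ HM]] := compact_bounded cK.
pose L := `|M0| + 1.
have L0 : 0 <= L by rewrite addr_ge0 // normr_ge0.
have hL : forall x, K x -> `|x| <= L.
  by apply: HM; rewrite /L (le_lt_trans (ler_norm M0)) // ltrDl.
exists N => p; exists N => Phi hPhi.
have [c [eta [c0 [eta0 H]]]] := hN Phi hPhi.
pose C := (L + L) ^+ n * c * 2 + 1.
have C0 : 0 < C by rewrite /C ltr_pwDr // mulr_ge0 // mulr_ge0 ?exprn_ge0 ?addr_ge0 // ltW.
exists C, eta; split => //; split => //.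
move=> xi -> eps epsb; have /andP[e0 ee] := epsb.
pose f := ext0 Om (u (scale_eps Phi eps)).
have fK : forall x, ~ K x -> f x = 0.
  move=> x nK; rewrite /f /ext0; case: ifPn => // /set_mem Omx.
  by apply: hsupp => //; apply: (An_scale e0 hPhi).
have fB : forall x, cabs (f x) <= c * eps ^- N.
  move=> x; have [Kx|nK] := pselect (K x).
    have Omx := KOm x Kx.
    have := H eps epsb x Kx; rewrite cdmulti0.
    by rewrite /f /ext0 ifT //; apply/mem_set.
  rewrite fK // /cabs /= expr0n /= addr0 sqrtr0.
  by rewrite mulr_ge0 ?invr_ge0 ?exprn_ge0 // ltW.
have B0 : 0 <= c * eps ^- N by rewrite mulr_ge0 ?invr_ge0 ?exprn_ge0 // ltW.
have fv : forall (x : 'rV[R]_n) (i : 'I_n), L < `|x ord0 i| -> f x = 0.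
  move=> x i hx; apply: fK => Kx.
  have := le_trans (entry_le_norm x i) (hL x Kx); rewrite leNgt hx //.
rewrite FT0 enorm0 addr0 expr1n invr1 mulr1.
apply: le_trans (cabs_le _ _) _.
have fvR : forall (x : 'rV[R]_n) (i : 'I_n), L < `|x ord0 i| -> complex.Re (f x) = 0.
  by move=> x i hx; rewrite (fv x i hx).
have fvI : forall (x : 'rV[R]_n) (i : 'I_n), L < `|x ord0 i| -> complex.Im (f x) = 0.
  by move=> x i hx; rewrite (fv x i hx).
have b1 := @intn_bound R n (fun x => complex.Re (f x)) L (c * eps ^- N) L0 B0
  (fun x => le_trans (Re_le_cabs _) (fB x)) fvR.
have b2 := @intn_bound R n (fun x => complex.Im (f x)) L (c * eps ^- N) L0 B0
  (fun x => le_trans (Im_le_cabs _) (fB x)) fvI.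
apply: le_trans (lerD b1 b2) _.
rewrite /C -mulr2n -mulr_natr.
have he : 0 <= eps ^- N by rewrite invr_ge0 exprn_ge0 // ltW.
set A := (L + L) ^+ n.
have A0 : 0 <= A by rewrite /A exprn_ge0 // addr_ge0.
set E := eps ^- N in he B0 *.
have : 0 <= A * c * 2 * E by rewrite !mulr_ge0 // ltW.
rewrite mulrDl mul1r; move=> h.
have -> : A * (c * E) *+ 2 = A * c * 2 * E by ring.
by rewrite mul1r lerDl.
Qed.
End M.
Section Cov.
Context {R : realType}.

Lemma micro_seq n (Om : set 'rV[R]_n) u (s : seq (set 'rV[R]_n)) :
  (forall G, G \in s -> micro_estimate Om u G) ->
  micro_estimate Om u [set x | exists2 G, G \in s & G x].
Proof.
elim: s => [|G s IH] hs.
  by apply: micro_sub (micro_set0 Om u) => x [].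
apply: micro_sub (micro_union (hs G (mem_head _ _)) (IH _)).
  move=> x [G' /[1!inE] /predU1P[->|Gs] G'x]; [by left|right; by exists G'].
by move=> G' G's; apply: hs; rewrite inE G's orbT.
Qed.

Lemma unit_sphere_closed n : closed [set x : 'rV[R]_n | `|x| = 1].
Proof.
have -> : [set x : 'rV[R]_n | `|x| = 1] = (@Num.norm _ _) @^-1` [set x : R | x = 1] by [].
apply: (continuous_closedP _).1; last exact: closed_eq.
exact: norm_continuous.
Qed.

Lemma cover_part n (Om : set 'rV[R]_n) u (Gam : set 'rV[R]_n) :
  is_cone Gam -> (forall xi, xi != 0 -> closure Gam xi -> Gam xi) ->
  Gam `<=` ~` SigmaG Om u ->
  micro_estimate Om u (Gam `\ 0).
Proof.
move=> cone hcl hsub.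
pose S := Gam `&` [set x : 'rV[R]_n | `|x| = 1].
have cS : compact S.
  apply: bounded_closed_compact.
    exists 1; split => // M M1 x [_ /= ->]; exact: ltW.
  move=> x clx; have [cG cN] := closureI clx.
  have nx : `|x| = 1.
    by move: cN; rewrite -(proj1 (closure_id _) (@unit_sphere_closed n)).
  split => //; apply: hcl => //.
  by rewrite -normr_eq0 nx oner_neq0.
pose D := [set G : set 'rV[R]_n | open G /\ is_cone G /\ micro_estimate Om u G].
have hcov : S `<=` cover D id.
  move=> x [Gx nx]; have x0 : x != 0 by rewrite -normr_eq0 nx oner_neq0.
  have := hsub x Gx; rewrite /SigmaG /= => nS.
  have [G0 [oG [cG [G0x mG]]]] : exists G0 : set 'rV[R]_n,
      open G0 /\ is_cone G0 /\ G0 x /\ micro_estimate Om u G0.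
    by apply: contrapT => hne; apply: nS; split.
  by exists G0.
rewrite compact_cover in cS.
have [D' sD' cov] := cS _ D id (fun G DG => proj1 DG) hcov.
have mU : micro_estimate Om u
    [set x | exists2 G, G \in finmap.enum_fset D' & G x].
  by apply: micro_seq => G GD; have /set_mem [_ [_ ?]] := sD' G GD.
apply: micro_sub mU.
move=> xi [Gxi /= xi0].
have xi0' : xi != 0 by apply/eqP.
have nxi : 0 < `|xi| by rewrite normr_gt0.
pose y := `|xi|^-1 *: xi.
have Sy : S y.
  split; first by apply: cone => //; rewrite invr_gt0.
  rewrite /= normrZ normfV normr_id mulVf //; exact: lt0r_neq0.
have [G /= GD' Gy] := cov y Sy.
exists G => //.
have -> : xi = `|xi| *: y by rewrite /y scalerA mulfV ?lt0r_neq0 // scale1r.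
have /set_mem [_ [cG _]] := sD' G GD'.
by apply: cG => //.
Qed.
End Cov.

Unset Implicit Arguments.
Set Strict Implicit.

Theorem mainTheorem2 (R : realType) (n : nat) (Om : set 'rV[R]_n)
    (u : ('rV[R]_n -> R[i]) -> 'rV[R]_n -> R[i]) (Gam : set 'rV[R]_n) :
  open Om ->
  moderate Om u ->
  compactly_supported Om u ->
  is_cone Gam ->
  (forall xi : 'rV[R]_n, xi != 0 -> closure Gam xi -> Gam xi) ->
  Gam `<=` ~` SigmaG Om u ->
  exists N : nat, forall p : nat, exists M : nat,
  forall Phi : 'rV[R]_n -> R[i], An n M Phi ->
  exists c eps0 : R, 0 < c /\ 0 < eps0 /\
  forall (xi : 'rV[R]_n) (eps : R), Gam xi -> 0 < eps < eps0 ->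
    cabs (FT (ext0 Om (u (scale_eps Phi eps))) xi)
      <= c * eps ^- N * (1 + enorm xi) ^- p.
Proof.
move=> oOm hmod hsupp cone hcl hsub.
have hm : micro_estimate Om u Gam.
  apply: micro_sub (micro_union (cover_part cone hcl hsub) (micro0 hmod hsupp)).
  move=> x Gx; have [->|x0] := eqVneq x 0; [by right|left].
  by split => // /eqP; rewrite (negbTE x0).
have [N hN] := hm; exists N => p; have [M hM] := hN p; exists M => Phi hP.
have [c [e [c0 [e0 H]]]] := hM Phi hP; exists c, e; do 2 split => //.
by move=> xi eps Gxi he; exact: H.
Qed.
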